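(* Let $S$ be an ample semigroup. Then $S$ has a semigroup of left I-quotients $Q$ such that $S$ is a bi-unary subsemigroup of $Q$ (that is, $a^+=aa^{-1}$ and $a^*=a^{-1}a$ in $Q$ for all $a\in S$) if and only if for all $b,c\in S$ there exist $u,v\in S$ such that \[ub=vc,\qquad u^+=v^+=(vc)^+,\qquad bc^*=u^*b.\]
   Context: For an element $a$ of an inverse semigroup $Q$, $a^{-1}$ is its unique inverse. A subsemigroup $S$ of an inverse semigroup $Q$ is a left I-order in $Q$ (and $Q$ a semigroup of left I-quotients of $S$) if every $q\in Q$ can be written $q=a^{-1}b$ with $a,b\in S$. On a semigroup $S$: $a\,\mathcal{R}^*\,b$ iff for all $x,y\in S^1$, $xa=ya\Leftrightarrow xb=yb$; $a\,\mathcal{L}^*\,b$ iff for all $x,y\in S^1$, $ax=ay\Leftrightarrow bx=by$. $S$ is left adequate if $E(S)$ is a semilattice and every $a$ is $\mathcal{R}^*$-related to a (unique) idempotent $a^+$; right adequate dually with $\mathcal{L}^*$ and $a^*$. $S$ is left ample if left adequate and $ab^+=(ab)^+a$ for all $a,b$; right ample if right adequate and $b^*a=a(ba)^*$ for all $a,b$; ample if both left and right ample. *)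

(* Defs.v *)
Set Implicit Arguments.

Section Semigroups.
Variable S : Type.
Variable mul : S -> S -> S.

Definition associative_op : Prop :=
  forall a b c, mul a (mul b c) = mul (mul a b) c.

Definition idempotent (e : S) : Prop := mul e e = e.

(* left / right action of an element of S^1 = option S (None = adjoined 1) *)
Definition lact (x : option S) (a : S) : S :=
  match x with None => a | Some x' => mul x' a end.
Definition ract (a : S) (x : option S) : S :=
  match x with None => a | Some x' => mul a x' end.

Definition Rstar (a b : S) : Prop :=
  forall x y : option S, lact x a = lact y a <-> lact x b = lact y b.
Definition Lstar (a b : S) : Prop :=
  forall x y : option S, ract a x = ract a y <-> ract b x = ract b y.

Definition idempotents_semilattice : Prop :=
  forall e f, idempotent e -> idempotent f ->
    idempotent (mul e f) /\ mul e f = mul f e.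

Definition left_adequate (plus : S -> S) : Prop :=
  associative_op /\ idempotents_semilattice /\
  (forall a, idempotent (plus a) /\ Rstar a (plus a)) /\
  (forall a e, idempotent e -> Rstar a e -> e = plus a).

Definition right_adequate (star : S -> S) : Prop :=
  associative_op /\ idempotents_semilattice /\
  (forall a, idempotent (star a) /\ Lstar a (star a)) /\
  (forall a e, idempotent e -> Lstar a e -> e = star a).

Definition left_ample (plus : S -> S) : Prop :=
  left_adequate plus /\ forall a b, mul a (plus b) = mul (plus (mul a b)) a.

Definition right_ample (star : S -> S) : Prop :=
  right_adequate star /\ forall a b, mul (star b) a = mul a (star (mul b a)).

Definition ample (plus star : S -> S) : Prop :=
  left_ample plus /\ right_ample star.

Definition is_inverse (a b : S) : Prop :=
  mul (mul a b) a = a /\ mul (mul b a) b = b.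

Definition inverse_semigroup (inv : S -> S) : Prop :=
  associative_op /\
  (forall a, is_inverse a (inv a)) /\
  (forall a b, is_inverse a b -> b = inv a).

End Semigroups.

Definition has_biunary_left_Iquotients (S : Type) (mul : S -> S -> S)
  (plus star : S -> S) : Prop :=
  exists (Q : Type) (mulQ : Q -> Q -> Q) (invQ : Q -> Q) (f : S -> Q),
    inverse_semigroup mulQ invQ /\
    (forall a b, f a = f b -> a = b) /\
    (forall a b, f (mul a b) = mulQ (f a) (f b)) /\
    (forall q : Q, exists a b : S, q = mulQ (invQ (f a)) (f b)) /\
    (forall a : S, f (plus a) = mulQ (f a) (invQ (f a))) /\
    (forall a : S, f (star a) = mulQ (invQ (f a)) (f a)).

(* Main.v *)
Require Import Defs.
From Stdlib Require Import Setoid Morphisms.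
From Stdlib Require Import FunctionalExtensionality PropExtensionality ProofIrrelevance IndefiniteDescription.


Section InvS.
Variable T : Type.
Variable m : T -> T -> T.
Variable i : T -> T.
Hypothesis HI : inverse_semigroup m i.
Local Notation "x ⊙ y" := (m x y) (at level 40, left associativity).

Lemma iA x y z : x ⊙ (y ⊙ z) = x ⊙ y ⊙ z.
Proof. destruct HI as [H _]. apply H. Qed.
Lemma I1 x : x ⊙ i x ⊙ x = x.
Proof. destruct HI as [_ [H _]]. apply H. Qed.
Lemma I2 x : i x ⊙ x ⊙ i x = i x.
Proof. destruct HI as [_ [H _]]. apply H. Qed.
Lemma Iuniq x y : x ⊙ y ⊙ x = x -> y ⊙ x ⊙ y = y -> y = i x.
Proof. destruct HI as [_ [_ H]]. intros; apply H; split; auto. Qed.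

Ltac nrm := repeat rewrite iA.
Ltac N H := repeat rewrite iA in H.
Ltac cx H H' := let T := type of H in match T with ?l = ?r =>
  assert (H' : forall z, z ⊙ l = z ⊙ r) by (intro; rewrite H; reflexivity);
  repeat setoid_rewrite iA in H' end.

Lemma I1c z x : z ⊙ x ⊙ i x ⊙ x = z ⊙ x.
Proof. pose proof (I1 x) as H. cx H H'. apply H'. Qed.
Lemma I2c z x : z ⊙ i x ⊙ x ⊙ i x = z ⊙ i x.
Proof. pose proof (I2 x) as H. cx H H'. apply H'. Qed.

Lemma icomm_Q e f : e ⊙ e = e -> f ⊙ f = f -> e ⊙ f = f ⊙ e.
Proof.
  assert (G : forall e f, e ⊙ e = e -> f ⊙ f = f -> (e ⊙ f) ⊙ (e ⊙ f) = e ⊙ f /\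
     (e ⊙ f) = i (e ⊙ f)).
  { clear e f. intros e f He Hf. cx He He'. cx Hf Hf'.
    pose proof (I1 (e ⊙ f)) as A1. N A1.
    pose proof (I2 (e ⊙ f)) as A2. N A2. cx A2 A2'.
    assert (Hx : f ⊙ i (e ⊙ f) ⊙ e = i (e ⊙ f)).
    { apply Iuniq.
      - nrm. rewrite Hf', He'. exact A1.
      - nrm. rewrite He', Hf', A2'. reflexivity. }
    assert (Hxx : i (e ⊙ f) ⊙ i (e ⊙ f) = i (e ⊙ f)).
    { transitivity (f ⊙ i (e ⊙ f) ⊙ e ⊙ (f ⊙ i (e ⊙ f) ⊙ e)); [rewrite Hx; reflexivity|].
      nrm. rewrite A2'. exact Hx. }
    assert (E1 : e ⊙ f = i (i (e ⊙ f))) by (apply Iuniq; [apply I2 | apply I1]).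
    assert (E2 : i (e ⊙ f) = i (i (e ⊙ f))) by (apply Iuniq; rewrite Hxx; exact Hxx).
    assert (E3 : e ⊙ f = i (e ⊙ f)) by congruence.
    split; [rewrite E3 at 1 2 3; exact Hxx | exact E3]. }
  intros He Hf. cx He He'. cx Hf Hf'.
  destruct (G e f He Hf) as [G1 G2]. destruct (G f e Hf He) as [G3 _].
  N G1. N G3.
  rewrite G2. symmetry. apply Iuniq.
  - nrm. rewrite Hf', He'. exact G1.
  - nrm. rewrite He', Hf'. exact G3.
Qed.

Lemma i_i x : i (i x) = x.
Proof. symmetry. apply Iuniq. apply I2. apply I1. Qed.

Lemma xix_idem x : x ⊙ i x ⊙ (x ⊙ i x) = x ⊙ i x.
Proof. nrm. rewrite I1. reflexivity. Qed.
Lemma ixx_idem x : i x ⊙ x ⊙ (i x ⊙ x) = i x ⊙ x.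
Proof. nrm. rewrite I2. reflexivity. Qed.

Lemma i_mul x y : i (x ⊙ y) = i y ⊙ i x.
Proof.
  symmetry. apply Iuniq.
  - pose proof (icomm_Q _ _ (xix_idem y) (ixx_idem x)) as C. N C. cx C C'.
    nrm. rewrite C'. rewrite I1, I1c. reflexivity.
  - pose proof (icomm_Q _ _ (ixx_idem x) (xix_idem y)) as C. N C. cx C C'.
    nrm. rewrite C'. rewrite I2, I2c. reflexivity.
Qed.

Lemma i_idem e : e ⊙ e = e -> i e = e.
Proof. intro H. symmetry. apply Iuniq; rewrite H; exact H. Qed.


Lemma Pfwd U V B C : i U ⊙ V = B ⊙ i C -> U ⊙ i U = V ⊙ i V ->
  U ⊙ B = V ⊙ C /\ V ⊙ C ⊙ i (V ⊙ C) = V ⊙ i V /\ B ⊙ (i C ⊙ C) = i U ⊙ U ⊙ B.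
Proof.
  intros Hq He. cx He He'.
  assert (Hiq : i (B ⊙ i C) = C ⊙ i B) by (rewrite i_mul, i_i; reflexivity).
  assert (Hiq' : i (i U ⊙ V) = i V ⊙ U) by (rewrite i_mul, i_i; reflexivity).
  assert (H1 : i U ⊙ U = B ⊙ i C ⊙ C ⊙ i B).
  { transitivity (i U ⊙ V ⊙ i (i U ⊙ V)).
    - rewrite Hiq'. nrm. rewrite <- He', I2. reflexivity.
    - rewrite Hq, Hiq. nrm. reflexivity. }
  assert (H2 : i V ⊙ V = C ⊙ i B ⊙ B ⊙ i C).
  { transitivity (i (i U ⊙ V) ⊙ (i U ⊙ V)).
    - rewrite Hiq'. nrm. rewrite He', I2. reflexivity.
    - rewrite Hq, Hiq. nrm. reflexivity. }
  assert (G4 : B ⊙ (i C ⊙ C) = i U ⊙ U ⊙ B).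
  { rewrite H1. pose proof (icomm_Q _ _ (ixx_idem C) (ixx_idem B)) as Cm. N Cm. cx Cm Cm'.
    nrm. rewrite Cm', I1. reflexivity. }
  split; [|split; [|exact G4]].
  - transitivity (U ⊙ (i U ⊙ U ⊙ B)); [nrm; rewrite I1; reflexivity|].
    rewrite <- G4. transitivity (U ⊙ (B ⊙ i C) ⊙ C); [nrm; reflexivity|].
    rewrite <- Hq. nrm. rewrite He, I1. reflexivity.
  - rewrite i_mul. 
    assert (K : i V ⊙ V ⊙ (C ⊙ i C) = i V ⊙ V).
    { rewrite H2. nrm. rewrite I2c. reflexivity. }
    transitivity (V ⊙ (i V ⊙ V ⊙ (C ⊙ i C)) ⊙ i V); [nrm; rewrite I1; reflexivity|].
    rewrite K. nrm. rewrite I1. reflexivity.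
Qed.

Lemma Qfwd A D : i (D ⊙ i D ⊙ A) ⊙ (A ⊙ i A ⊙ D) = i A ⊙ D /\
  (D ⊙ i D ⊙ A) ⊙ i (D ⊙ i D ⊙ A) = (A ⊙ i A ⊙ D) ⊙ i (A ⊙ i A ⊙ D).
Proof.
  set (U := D ⊙ i D ⊙ A). set (V := A ⊙ i A ⊙ D).
  assert (Ci : i U = i A ⊙ (D ⊙ i D)).
  { unfold U. rewrite i_mul, (i_idem _ (xix_idem D)). reflexivity. }
  assert (Cj : i V = i D ⊙ (A ⊙ i A)).
  { unfold V. rewrite i_mul, (i_idem _ (xix_idem A)). reflexivity. }
  pose proof (icomm_Q _ _ (xix_idem D) (xix_idem A)) as Cm. N Cm. cx Cm Cm'.
  split.
  - rewrite Ci. unfold V. nrm. rewrite Cm', I2, I1c. reflexivity.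
  - rewrite Ci, Cj. unfold U, V. nrm. rewrite Cm, I1c, Cm', I1. reflexivity.
Qed.
End InvS.

Lemma uniq_gen (T : Type) (m : T -> T -> T) (i : T -> T)
  (A : forall a b c, m a (m b c) = m (m a b) c)
  (Hi : forall x, is_inverse m x (i x))
  (Hc : forall e f, m e e = e -> m f f = f -> m e f = m f e) x y :
  is_inverse m x y -> y = i x.
Proof.
  intros [Y1 Y2]. destruct (Hi x) as [I1 I2].
  assert (P1 : m (m y x) (m y x) = m y x) by (rewrite A, Y2; reflexivity).
  assert (P2 : m (m (i x) x) (m (i x) x) = m (i x) x) by (rewrite A, I2; reflexivity).
  assert (P3 : m (m x y) (m x y) = m x y) by (rewrite A, Y1; reflexivity).
  assert (P4 : m (m x (i x)) (m x (i x)) = m x (i x)) by (rewrite A, I1; reflexivity).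
  assert (E1 : m (m y x) (m (i x) x) = m y x).
  { rewrite A, <- (A y x (i x)), <- (A y (m x (i x)) x), I1. reflexivity. }
  assert (Ey : y = m (m (i x) x) y).
  { rewrite <- Y2 at 1. rewrite <- E1, (Hc _ _ P1 P2), <- A, Y2. reflexivity. }
  assert (E2 : m (m x y) (m x (i x)) = m x (i x)).
  { rewrite A, Y1. reflexivity. }
  assert (Ex : i x = m (m (i x) x) y).
  { rewrite <- I2 at 1. rewrite <- A, <- E2, (Hc _ _ P3 P4). rewrite A, (A (i x) x (i x)), I2, A. reflexivity. }
  congruence.
Qed.


Section Ample.
Variable S : Type.
Variable mul : S -> S -> S.
Variables plus star : S -> S.
Hypothesis Hample : ample mul plus star.
Local Notation "x ⋅ y" := (mul x y) (at level 40, left associativity).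

Lemma assoc : forall a b c, a ⋅ (b ⋅ c) = a ⋅ b ⋅ c.
Proof. destruct Hample as [[[H _] _] _]. exact H. Qed.
Lemma sl : forall e f, e ⋅ e = e -> f ⋅ f = f -> (e ⋅ f) ⋅ (e ⋅ f) = e ⋅ f /\ e ⋅ f = f ⋅ e.
Proof. destruct Hample as [[[_ [H _]] _] _]. exact H. Qed.
Lemma plus_spec : forall a, plus a ⋅ plus a = plus a /\ Rstar mul a (plus a).
Proof. destruct Hample as [[[_ [_ [H _]]] _] _]. exact H. Qed.
Lemma plus_uniq : forall a e, e ⋅ e = e -> Rstar mul a e -> e = plus a.
Proof. destruct Hample as [[[_ [_ [_ H]]] _] _]. exact H. Qed.
Lemma star_spec : forall a, star a ⋅ star a = star a /\ Lstar mul a (star a).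
Proof. destruct Hample as [_ [[_ [_ [H _]]] _]]. exact H. Qed.
Lemma star_uniq : forall a e, e ⋅ e = e -> Lstar mul a e -> e = star a.
Proof. destruct Hample as [_ [[_ [_ [_ H]]] _]]. exact H. Qed.
Lemma lamp : forall a b, a ⋅ plus b = plus (a ⋅ b) ⋅ a.
Proof. destruct Hample as [[_ H] _]. exact H. Qed.
Lemma ramp : forall a b, star b ⋅ a = a ⋅ star (b ⋅ a).
Proof. destruct Hample as [_ [_ H]]. exact H. Qed.

Lemma plus_idem a : plus a ⋅ plus a = plus a.
Proof. apply plus_spec. Qed.
Lemma star_idem a : star a ⋅ star a = star a.
Proof. apply star_spec. Qed.
Lemma Rp a x y : x ⋅ a = y ⋅ a <-> x ⋅ plus a = y ⋅ plus a.
Proof. exact (proj2 (plus_spec a) (Some x) (Some y)). Qed.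
Lemma Rp1 a x : x ⋅ a = a <-> x ⋅ plus a = plus a.
Proof. exact (proj2 (plus_spec a) (Some x) None). Qed.
Lemma Ls a x y : a ⋅ x = a ⋅ y <-> star a ⋅ x = star a ⋅ y.
Proof. exact (proj2 (star_spec a) (Some x) (Some y)). Qed.
Lemma Ls1 a x : a ⋅ x = a <-> star a ⋅ x = star a.
Proof. exact (proj2 (star_spec a) (Some x) None). Qed.
Lemma plus_l a : plus a ⋅ a = a.
Proof. apply (proj2 (Rp1 a (plus a))). apply plus_idem. Qed.
Lemma star_r a : a ⋅ star a = a.
Proof. apply (proj2 (Ls1 a (star a))). apply star_idem. Qed.
Lemma plus_id e : e ⋅ e = e -> plus e = e.
Proof. intro H. symmetry. apply plus_uniq; auto. intros x y; tauto. Qed.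
Lemma star_id e : e ⋅ e = e -> star e = e.
Proof. intro H. symmetry. apply star_uniq; auto. intros x y; tauto. Qed.
Lemma icomm e f : e ⋅ e = e -> f ⋅ f = f -> e ⋅ f = f ⋅ e.
Proof. intros; apply sl; auto. Qed.
Lemma imul e f : e ⋅ e = e -> f ⋅ f = f -> (e ⋅ f) ⋅ (e ⋅ f) = e ⋅ f.
Proof. intros; apply sl; auto. Qed.
Lemma pp_comm a b : plus a ⋅ plus b = plus b ⋅ plus a.
Proof. apply icomm; apply plus_idem. Qed.
Lemma ss_comm a b : star a ⋅ star b = star b ⋅ star a.
Proof. apply icomm; apply star_idem. Qed.
Lemma ps_comm a b : plus a ⋅ star b = star b ⋅ plus a.
Proof. apply icomm; [apply plus_idem|apply star_idem]. Qed.

Lemma plus_mulp x a : plus (x ⋅ a) = plus (x ⋅ plus a).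
Proof.
  apply plus_uniq. apply plus_idem.
  intros s t. etransitivity; [| apply (proj2 (plus_spec (x ⋅ a)) s t)].
  destruct s as [s|], t as [t|]; simpl; rewrite ?assoc; symmetry; apply Rp.
Qed.
Lemma star_mulp a x : star (a ⋅ x) = star (star a ⋅ x).
Proof.
  apply star_uniq. apply star_idem.
  intros s t. etransitivity; [| apply (proj2 (star_spec (a ⋅ x)) s t)].
  destruct s as [s|], t as [t|]; simpl; rewrite <- ?assoc; symmetry; apply Ls.
Qed.
Lemma plus_le a b : plus a ⋅ plus (a ⋅ b) = plus (a ⋅ b).
Proof. apply (proj1 (Rp1 _ _)). rewrite assoc, plus_l. reflexivity. Qed.
Lemma star_le a b : star (a ⋅ b) ⋅ star b = star (a ⋅ b).
Proof. apply (proj1 (Ls1 _ _)). rewrite <- assoc, star_r. reflexivity. Qed.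
Lemma absorb x z w : x ⋅ z = z -> plus w = plus z -> x ⋅ w = w.
Proof. intros H1 H2. apply (proj2 (Rp1 _ _)). rewrite H2. apply (proj1 (Rp1 _ _)). exact H1. Qed.
Lemma idem_plus_eq v e : e ⋅ e = e -> plus (v ⋅ e) = plus v -> v ⋅ e = v.
Proof.
  intros He H. rewrite <- (plus_id e He) at 1. rewrite lamp, H. apply plus_l.
Qed.
Lemma star_absorb u z : star u ⋅ z = z -> star (u ⋅ z) = star z.
Proof. intro H. rewrite star_mulp, H. reflexivity. Qed.

Lemma pl_idem e z : e ⋅ e = e -> plus (e ⋅ z) ⋅ e = plus (e ⋅ z).
Proof.
  intro He. pose proof (plus_le e z) as H. rewrite (plus_id e He) in H.
  rewrite <- (icomm e (plus (e ⋅ z)) He (plus_idem _)). exact H.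
Qed.

Definition St a b := plus a = plus b.
Definition Eq4 a b c d := St a b /\ St c d /\ star a = star c /\
  forall x y, x ⋅ a = y ⋅ c -> x ⋅ b = y ⋅ d.
Definition CP b c u v := u ⋅ b = v ⋅ c /\ plus u = plus v /\ plus v = plus (v ⋅ c) /\
  b ⋅ star c = star u ⋅ b.
Definition Phi a b e := star (plus (b ⋅ e) ⋅ a).

Hypothesis HC : forall b c, exists u v, CP b c u v.

Lemma graph_refl a b x y : St a b -> x ⋅ a = y ⋅ a -> x ⋅ b = y ⋅ b.
Proof.
  intros Hs H. apply (proj2 (Rp b x y)). unfold St in Hs. rewrite <- Hs.
  apply (proj1 (Rp a x y)). exact H.
Qed.

Lemma Eq_refl a b : St a b -> Eq4 a b a b.
Proof. intro H. repeat split; auto. intros x y; apply graph_refl; auto. Qed.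

Lemma Eq_sym a b c d : Eq4 a b c d -> Eq4 c d a b.
Proof.
  intros [H1 [H2 [H3 H4]]]. repeat split; auto.
  intros x y H. symmetry. apply H4. symmetry. exact H.
Qed.

Lemma W a b a' b' : Eq4 a b a' b' -> exists u0 v0, u0 ⋅ a = v0 ⋅ a' /\ u0 ⋅ b = v0 ⋅ b' /\
  star u0 ⋅ a = a /\ star v0 ⋅ a' = a'.
Proof.
  intros [Hab [Ha'b' [Hs Hg]]]. destruct (HC a a') as [u [v [H1 [H2 [H3 H4]]]]].
  exists u, v.
  assert (Hua : star u ⋅ a = a) by (rewrite <- H4, <- Hs, star_r; reflexivity).
  split; [exact H1|]. split; [apply Hg; exact H1|]. split; [exact Hua|].
  rewrite ramp, <- H1, (star_absorb _ _ Hua), Hs, star_r. reflexivity.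
Qed.

Lemma Eex a b c d u v : St a b -> St c d -> u ⋅ a = v ⋅ c -> u ⋅ b = v ⋅ d ->
  star u ⋅ a = a -> star v ⋅ c = c -> Eq4 a b c d.
Proof.
  intros Hab Hcd H1 H2 H3 H4. split; [exact Hab|]. split; [exact Hcd|]. split.
  { rewrite <- (star_absorb _ _ H3), <- (star_absorb _ _ H4), H1. reflexivity. }
  intros x y Hxy. destruct (HC x u) as [p [q [K1 [_ [_ K4]]]]].
  assert (S1 : p ⋅ y ⋅ c = q ⋅ v ⋅ c).
  { rewrite <- assoc, <- Hxy, assoc, K1, <- assoc, H1, assoc. reflexivity. }
  assert (S2 : p ⋅ y ⋅ d = q ⋅ v ⋅ d).
  { apply (proj2 (Rp d _ _)). unfold St in Hcd. rewrite <- Hcd. apply (proj1 (Rp c _ _)). exact S1. }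
  assert (S3 : p ⋅ (y ⋅ d) = p ⋅ (x ⋅ b)).
  { rewrite assoc, S2, <- assoc, <- H2, assoc, <- K1, <- assoc. reflexivity. }
  apply (proj1 (Ls p _ _)) in S3.
  assert (S4 : star p ⋅ (x ⋅ a) = x ⋅ a).
  { rewrite assoc, <- K4, <- assoc, H3. reflexivity. }
  assert (S5 : star p ⋅ (x ⋅ b) = x ⋅ b).
  { apply (absorb _ _ _ S4). rewrite plus_mulp, (plus_mulp x a). unfold St in Hab. rewrite Hab. reflexivity. }
  assert (S6 : star p ⋅ (y ⋅ d) = y ⋅ d).
  { apply (absorb _ _ _ S4). rewrite plus_mulp, Hxy, (plus_mulp y c). unfold St in Hcd. rewrite Hcd. reflexivity. }
  rewrite <- S5, <- S6. symmetry. exact S3.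
Qed.

Lemma Eq_trans a b c d e f : Eq4 a b c d -> Eq4 c d e f -> Eq4 a b e f.
Proof.
  intros [Hab [Hcd [Hs1 Hg1]]] [_ [Hef [Hs2 Hg2]]].
  split; [exact Hab|]. split; [exact Hef|]. split; [congruence|].
  intros x y Hxy. destruct (HC (x ⋅ a) c) as [u [v [K1 [_ [_ K4]]]]].
  assert (E1 : u ⋅ x ⋅ b = v ⋅ d) by (apply Hg1; rewrite <- assoc; exact K1).
  assert (E2 : v ⋅ d = u ⋅ y ⋅ f) by (apply Hg2; rewrite <- K1, Hxy, assoc; reflexivity).
  assert (E3 : u ⋅ (x ⋅ b) = u ⋅ (y ⋅ f)) by (rewrite !assoc; congruence).
  apply (proj1 (Ls u _ _)) in E3.
  assert (S4 : star u ⋅ (x ⋅ a) = x ⋅ a).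
  { rewrite <- K4, <- Hs1, <- assoc, star_r. reflexivity. }
  assert (S5 : star u ⋅ (x ⋅ b) = x ⋅ b).
  { apply (absorb _ _ _ S4). rewrite plus_mulp, (plus_mulp x a). unfold St in Hab. rewrite Hab. reflexivity. }
  assert (S6 : star u ⋅ (y ⋅ f) = y ⋅ f).
  { apply (absorb _ _ _ S4). rewrite plus_mulp, Hxy, (plus_mulp y e). unfold St in Hef. rewrite Hef. reflexivity. }
  rewrite <- S5, <- S6. exact E3.
Qed.

Lemma Eq_swap a b c d : Eq4 a b c d -> Eq4 b a d c.
Proof.
  intro H. destruct (W _ _ _ _ H) as [u0 [v0 [H1 [H2 [H3 H4]]]]].
  destruct H as [Hab [Hcd _]].
  apply (Eex _ _ _ _ u0 v0); unfold St in *; auto.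
  - apply (absorb _ _ _ H3). auto.
  - apply (absorb _ _ _ H4). auto.
Qed.

Lemma Phi_move u a b e : star u ⋅ a = a -> Phi a b e = star (plus (u ⋅ b ⋅ e) ⋅ (u ⋅ a)).
Proof.
  intro H. unfold Phi.
  assert (E : u ⋅ (plus (b ⋅ e) ⋅ a) = plus (u ⋅ b ⋅ e) ⋅ (u ⋅ a)).
  { rewrite assoc, lamp, !assoc. reflexivity. }
  rewrite <- E, (star_mulp u), assoc, <- ps_comm, <- assoc, H. reflexivity.
Qed.

Lemma Phi_inv a b a' b' e : Eq4 a b a' b' -> Phi a b e = Phi a' b' e.
Proof.
  intro H. destruct (W _ _ _ _ H) as [u0 [v0 [H1 [H2 [H3 H4]]]]].
  rewrite (Phi_move u0 a b e H3), (Phi_move v0 a' b' e H4), H1, H2. reflexivity.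
Qed.

Lemma prod_St a b c d u v : St a b -> St c d -> CP b c u v -> St (u ⋅ a) (v ⋅ d).
Proof.
  unfold St. intros Hab Hcd [K1 _].
  rewrite plus_mulp, Hab, <- plus_mulp, K1, plus_mulp, Hcd, <- plus_mulp. reflexivity.
Qed.

Lemma prod_star a b c u v : St a b -> CP b c u v -> star (u ⋅ a) = Phi a b (star c).
Proof.
  unfold St, Phi. intros Hab [_ [_ [_ K4]]].
  rewrite star_mulp. f_equal.
  rewrite <- (plus_l a) at 1. rewrite Hab, assoc, lamp, pl_idem by apply star_idem.
  rewrite <- K4. reflexivity.
Qed.

Lemma Phi_comp a b c d u v e : St c d -> CP b c u v ->
  Phi (u ⋅ a) (v ⋅ d) e = Phi a b (Phi c d e).
Proof.
  unfold St. intros Hcd [K1 [_ [_ K4]]].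
  set (g := plus (d ⋅ e)).
  assert (Hg : g ⋅ g = g) by apply plus_idem.
  unfold Phi at 2. fold g.
  set (k := plus (b ⋅ star (g ⋅ c))).
  assert (i1 : c ⋅ star (g ⋅ c) = g ⋅ c).
  { rewrite <- ramp, (star_id g Hg). reflexivity. }
  assert (i2 : u ⋅ (b ⋅ star (g ⋅ c)) = v ⋅ g ⋅ c).
  { rewrite assoc, K1, <- assoc, i1, assoc. reflexivity. }
  assert (i3 : plus (v ⋅ g ⋅ c) = plus (v ⋅ g)).
  { rewrite plus_mulp, Hcd, <- assoc. f_equal. f_equal.
    unfold g. rewrite <- pp_comm. apply plus_le. }
  assert (i4 : u ⋅ k = plus (v ⋅ g) ⋅ u).
  { unfold k. rewrite lamp, i2, i3. reflexivity. }
  assert (i6 : star u ⋅ k = k).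
  { unfold k. apply (proj1 (Rp1 _ _)). rewrite assoc, <- K4, <- assoc.
    f_equal. rewrite ss_comm. apply star_le. }
  unfold Phi.
  rewrite <- assoc, (plus_mulp v (d ⋅ e)). fold g.
  rewrite assoc, <- i4, <- assoc, (star_mulp u), assoc, i6. reflexivity.
Qed.

Lemma prod_wd a b a' b' c d c' d' u v u' v' : Eq4 a b a' b' -> Eq4 c d c' d' ->
  CP b c u v -> CP b' c' u' v' -> Eq4 (u ⋅ a) (v ⋅ d) (u' ⋅ a') (v' ⋅ d').
Proof.
  intros E1 E2 C1 C2.
  pose proof E1 as [Hab [Ha'b' [Hs1 Hg1]]]. pose proof E2 as [Hcd [Hc'd' [Hs2 Hg2]]].
  split; [eapply prod_St; eauto|]. split; [eapply prod_St; eauto|]. split.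
  { rewrite (prod_star _ _ _ _ _ Hab C1), (prod_star _ _ _ _ _ Ha'b' C2), Hs2.
    apply Phi_inv; auto. }
  intros x y H. destruct C1 as [K1 _]. destruct C2 as [K1' _].
  rewrite !assoc in H. apply Hg1 in H. rewrite <- !assoc, K1, K1', !assoc in H.
  apply Hg2 in H. rewrite !assoc. exact H.
Qed.

Lemma prod_assoc a b c d e f u v u' v' s t s' t' : St a b -> St c d -> St e f ->
  CP b c u v -> CP (v ⋅ d) e u' v' -> CP d e s t -> CP b (s ⋅ c) s' t' ->
  Eq4 (u' ⋅ (u ⋅ a)) (v' ⋅ f) (s' ⋅ a) (t' ⋅ (t ⋅ f)).
Proof.
  intros Hab Hcd Hef C1 C2 C3 C4.
  assert (H1 : St (u ⋅ a) (v ⋅ d)) by (eapply prod_St; eauto).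
  assert (H2 : St (s ⋅ c) (t ⋅ f)) by (eapply prod_St; eauto).
  split; [eapply prod_St; eauto|]. split; [eapply prod_St; eauto|]. split.
  { rewrite (prod_star _ _ _ _ _ H1 C2), (prod_star _ _ _ _ _ Hab C4).
    rewrite (Phi_comp _ _ _ _ _ _ _ Hcd C1).
    rewrite (prod_star _ _ _ _ _ Hcd C3). reflexivity. }
  intros x y H. destruct C1 as [K1 _], C2 as [K2 _], C3 as [K3 _], C4 as [K4 _].
  rewrite !assoc in H. apply (graph_refl _ _ _ _ Hab) in H.
  rewrite <- !assoc, K1, K4, !assoc in H. apply (graph_refl _ _ _ _ Hcd) in H.
  rewrite <- !assoc, K2, K3, !assoc in H. apply (graph_refl _ _ _ _ Hef) in H.
  rewrite !assoc. exact H.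
Qed.

Lemma Phi_self a b : St a b -> Phi a b (star b) = star a.
Proof.
  unfold St, Phi. intro H. rewrite star_r, <- H, plus_l. reflexivity.
Qed.

Lemma inv_law a b u v u2 v2 : St a b -> CP b b u v -> CP (v ⋅ a) a u2 v2 ->
  Eq4 (u2 ⋅ (u ⋅ a)) (v2 ⋅ b) a b.
Proof.
  intros Hab C1 C2.
  assert (Hba : St b a) by (unfold St in *; auto).
  assert (Hua : u ⋅ a = v ⋅ a).
  { destruct C1 as [K1 _]. apply (graph_refl b a); auto. }
  assert (H1 : St (u ⋅ a) (v ⋅ a)) by (eapply prod_St; eauto).
  split; [eapply prod_St; eauto|]. split; [exact Hab|]. split.
  { rewrite (prod_star _ _ _ _ _ H1 C2), (Phi_comp _ _ _ _ _ _ _ Hba C1).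
    rewrite Phi_self by auto. apply Phi_self; auto. }
  intros x y H. destruct C2 as [K2 _].
  rewrite Hua, K2, assoc in H. apply (graph_refl _ _ _ _ Hab) in H. rewrite assoc. exact H.
Qed.

Lemma idem_diag a b u v : St a b -> CP b a u v -> Eq4 (u ⋅ a) (v ⋅ b) a b -> a = b.
Proof.
  unfold St. intros Hab [K1 [K2 [K3 K4]]] [_ [_ [Hs Hg]]].
  assert (Hua : star u ⋅ a = a) by (rewrite ramp, Hs, star_r; reflexivity).
  assert (Hub : star u ⋅ b = b) by (apply (absorb _ _ _ Hua); auto).
  assert (S2 : v ⋅ b = v ⋅ a).
  { assert (H := Hg (plus (v ⋅ b)) (plus (v ⋅ b) ⋅ u) (assoc _ _ _)).
    rewrite plus_l in H. rewrite H, <- assoc, K1.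
    rewrite plus_mulp, <- Hab, <- plus_mulp, plus_l. reflexivity. }
  assert (S3 : v ⋅ plus a = u ⋅ plus a).
  { rewrite Hab. apply (proj1 (Rp b _ _)). congruence. }
  assert (S4 : v ⋅ plus a = v).
  { apply idem_plus_eq. apply plus_idem. rewrite <- plus_mulp. auto. }
  assert (S5 : u ⋅ b = u ⋅ a).
  { rewrite K1, <- S4, S3, <- assoc, plus_l. reflexivity. }
  apply (proj1 (Ls u _ _)) in S5. congruence.
Qed.

Lemma Phi_diag w e : e ⋅ e = e -> Phi w w e = star w ⋅ e.
Proof.
  intro He. unfold Phi. rewrite <- lamp, (plus_id e He), star_mulp.
  apply star_id, imul; auto using star_idem.
Qed.

Lemma diag_eq x y : star x = star y -> Eq4 x x y y.
Proof. intro H. repeat split; auto. Qed.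

Lemma diag_comm w z u v u' v' : CP w z u v -> CP z w u' v' -> Eq4 (u ⋅ w) (v ⋅ z) (u' ⋅ z) (v' ⋅ w).
Proof.
  intros C1 C2.
  pose proof C1 as [K1 _]. pose proof C2 as [K2 _].
  rewrite <- K1, <- K2. apply diag_eq.
  assert (Hw : St w w) by reflexivity. assert (Hz : St z z) by reflexivity.
  rewrite (prod_star _ _ _ _ _ Hw C1), (prod_star _ _ _ _ _ Hz C2).
  rewrite !Phi_diag by apply star_idem. apply ss_comm.
Qed.

Lemma St_pl a : St (plus a) a.
Proof. unfold St. apply plus_id, plus_idem. Qed.
Lemma St_pr a : St a (plus a).
Proof. unfold St. symmetry. apply plus_id, plus_idem. Qed.

Lemma f_inj a b : Eq4 (plus a) a (plus b) b -> a = b.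
Proof.
  intros [_ [_ [Hs Hg]]]. rewrite !star_id in Hs by apply plus_idem.
  assert (H := Hg (plus a) (plus a)). rewrite Hs in H at 2.
  rewrite plus_l, Hs, plus_l in H. apply H. reflexivity.
Qed.

Lemma f_hom a b u v : CP a (plus b) u v -> Eq4 (u ⋅ plus a) (v ⋅ b) (plus (a ⋅ b)) (a ⋅ b).
Proof.
  intro C. split; [eapply prod_St; eauto using St_pl|]. split; [apply St_pl|]. split.
  { rewrite (prod_star _ _ _ _ _ (St_pl a) C). unfold Phi.
    rewrite (star_id (plus b)) by apply plus_idem. rewrite <- plus_mulp, <- pp_comm, plus_le.
    reflexivity. }
  intros x y H. destruct C as [K1 _].
  assert (H' : x ⋅ (u ⋅ a) = y ⋅ (a ⋅ plus b)).
  { rewrite <- (plus_l a) at 1. rewrite (assoc u), (assoc x), H, <- assoc, lamp. reflexivity. }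
  rewrite K1, !assoc in H'.
  apply (proj2 (Rp b _ _)) in H'. rewrite !assoc. exact H'.
Qed.

Lemma f_plus a u v : CP a a u v -> Eq4 (u ⋅ plus a) (v ⋅ plus a) (plus (plus a)) (plus a).
Proof.
  intro C. pose proof C as [K1 _].
  assert (H : u ⋅ plus a = v ⋅ plus a) by (apply (proj1 (Rp a _ _)); exact K1).
  rewrite <- H, (plus_id (plus a)) by apply plus_idem. apply diag_eq.
  rewrite (prod_star _ _ _ _ _ (St_pl a) C). unfold Phi. rewrite star_r, plus_idem. reflexivity.
Qed.

Lemma f_star a u v : CP (plus a) (plus a) u v -> Eq4 (u ⋅ a) (v ⋅ a) (plus (star a)) (star a).
Proof.
  intro C. pose proof C as [K1 _].
  assert (H : u ⋅ a = v ⋅ a) by (apply (proj2 (Rp a _ _)); exact K1).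
  rewrite <- H, (plus_id (star a)) by apply star_idem. apply diag_eq.
  rewrite (prod_star _ _ _ _ _ (St_pr a) C). unfold Phi.
  rewrite (star_id (plus a)) by apply plus_idem. rewrite plus_idem, (plus_id (plus a)) by apply plus_idem.
  rewrite plus_l, (star_id (star a)) by apply star_idem. reflexivity.
Qed.

Lemma f_Iorder a b u v : St a b -> CP (plus a) (plus b) u v -> Eq4 (u ⋅ a) (v ⋅ b) a b.
Proof.
  intros Hab C. pose proof C as [K1 _].
  split; [exact (prod_St a (plus a) (plus b) b u v (St_pr a) (St_pl b) C)|]. split; [exact Hab|]. split.
  { rewrite (prod_star _ _ _ _ _ (St_pr a) C). unfold Phi.
    rewrite (star_id (plus b)) by apply plus_idem. unfold St in Hab. rewrite <- Hab.
    rewrite plus_idem, (plus_id (plus a)) by apply plus_idem. rewrite plus_l. reflexivity. }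
  intros x y H. unfold St in Hab. rewrite <- Hab in K1.
  assert (Hua : u ⋅ a = v ⋅ a) by (apply (proj2 (Rp a _ _)); exact K1).
  rewrite Hua, assoc in H. apply (graph_refl a b) in H; [|exact Hab]. rewrite assoc. exact H.
Qed.

Definition Uf (b c : S) : S := proj1_sig (constructive_indefinite_description _ (HC b c)).
Lemma Vex b c : exists v, CP b c (Uf b c) v.
Proof. exact (proj2_sig (constructive_indefinite_description _ (HC b c))). Qed.
Definition Vf b c := proj1_sig (constructive_indefinite_description _ (Vex b c)).
Lemma UV b c : CP b c (Uf b c) (Vf b c).
Proof. exact (proj2_sig (constructive_indefinite_description _ (Vex b c))). Qed.

Definition cls a b : S -> S -> Prop := fun c d => Eq4 a b c d.
Definition Q := {C : S -> S -> Prop | exists a b, St a b /\ C = cls a b}.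
Definition mkQ a b (H : St a b) : Q :=
  exist _ (cls a b) (ex_intro _ a (ex_intro _ b (conj H eq_refl))).

Lemma mkQ_eq a b c d H1 H2 : Eq4 a b c d -> mkQ a b H1 = mkQ c d H2.
Proof.
  intro E. unfold mkQ. apply subset_eq_compat.
  extensionality x. extensionality y. apply propositional_extensionality.
  unfold cls. split; intro H.
  - exact (Eq_trans _ _ _ _ _ _ (Eq_sym _ _ _ _ E) H).
  - exact (Eq_trans _ _ _ _ _ _ E H).
Qed.

Lemma mkQ_inv a b c d H1 H2 : mkQ a b H1 = mkQ c d H2 -> Eq4 a b c d.
Proof.
  intro E. apply (f_equal (@proj1_sig _ _)) in E. simpl in E.
  assert (K := equal_f (equal_f E c) d). unfold cls in K. rewrite K. apply Eq_refl; auto.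
Qed.

Lemma Q_surj (q : Q) : exists a b H, q = mkQ a b H.
Proof.
  destruct q as [C [a [b [H e]]]]. exists a, b, H. subst C. unfold mkQ.
  apply subset_eq_compat. reflexivity.
Qed.

Lemma rp_ex (q : Q) : exists p : S * S, St (fst p) (snd p) /\ proj1_sig q = cls (fst p) (snd p).
Proof. destruct (proj2_sig q) as [a [b H]]. exists (a, b). exact H. Qed.
Definition rp q := proj1_sig (constructive_indefinite_description _ (rp_ex q)).
Lemma rp_St q : St (fst (rp q)) (snd (rp q)).
Proof. exact (proj1 (proj2_sig (constructive_indefinite_description _ (rp_ex q)))). Qed.
Lemma rp_cls q : proj1_sig q = cls (fst (rp q)) (snd (rp q)).
Proof. exact (proj2 (proj2_sig (constructive_indefinite_description _ (rp_ex q)))). Qed.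
Lemma rp_mk a b H : Eq4 (fst (rp (mkQ a b H))) (snd (rp (mkQ a b H))) a b.
Proof.
  pose proof (rp_cls (mkQ a b H)) as E. simpl in E.
  assert (K := equal_f (equal_f E a) b). unfold cls in K. rewrite <- K. apply Eq_refl; auto.
Qed.

Definition mulQ (q r : Q) : Q :=
  mkQ (Uf (snd (rp q)) (fst (rp r)) ⋅ fst (rp q)) (Vf (snd (rp q)) (fst (rp r)) ⋅ snd (rp r))
    (prod_St _ _ _ _ _ _ (rp_St q) (rp_St r) (UV _ _)).
Definition invQ (q : Q) : Q := mkQ (snd (rp q)) (fst (rp q)) (eq_sym (rp_St q)).

Lemma mul_mk a b c d H1 H2 : mulQ (mkQ a b H1) (mkQ c d H2) =
  mkQ (Uf b c ⋅ a) (Vf b c ⋅ d) (prod_St a b c d _ _ H1 H2 (UV b c)).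
Proof.
  unfold mulQ. apply mkQ_eq.
  exact (prod_wd _ _ _ _ _ _ _ _ _ _ _ _ (rp_mk a b H1) (rp_mk c d H2) (UV _ _) (UV b c)).
Qed.

Lemma inv_mk a b H : invQ (mkQ a b H) = mkQ b a (eq_sym H).
Proof. unfold invQ. apply mkQ_eq. apply Eq_swap, rp_mk. Qed.

Lemma QA : forall q r t, mulQ q (mulQ r t) = mulQ (mulQ q r) t.
Proof.
  intros q r t.
  destruct (Q_surj q) as [a [b [Hab ->]]].
  destruct (Q_surj r) as [c [d [Hcd ->]]].
  destruct (Q_surj t) as [e [f [Hef ->]]].
  rewrite !mul_mk. apply mkQ_eq. apply Eq_sym.
  exact (prod_assoc a b c d e f _ _ _ _ _ _ _ _ Hab Hcd Hef (UV b c) (UV _ e) (UV d e) (UV b _)).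
Qed.

Lemma QI : forall q, is_inverse mulQ q (invQ q).
Proof.
  intro q. destruct (Q_surj q) as [a [b [Hab ->]]].
  unfold is_inverse. rewrite inv_mk, !mul_mk. split; apply mkQ_eq.
  - exact (inv_law a b _ _ _ _ Hab (UV b b) (UV _ a)).
  - exact (inv_law b a _ _ _ _ (eq_sym Hab) (UV a a) (UV _ b)).
Qed.

Lemma Qcomm : forall e g, mulQ e e = e -> mulQ g g = g -> mulQ e g = mulQ g e.
Proof.
  intros e g He Hg.
  destruct (Q_surj e) as [a [b [Hab ->]]].
  destruct (Q_surj g) as [c [d [Hcd ->]]].
  rewrite mul_mk in He, Hg. apply mkQ_inv in He. apply mkQ_inv in Hg.
  apply idem_diag in He; [|exact Hab|apply UV]. apply idem_diag in Hg; [|exact Hcd|apply UV].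
  subst b d. rewrite !mul_mk. apply mkQ_eq. apply diag_comm; apply UV.
Qed.

Lemma backward : has_biunary_left_Iquotients mul plus star.
Proof.
  exists Q, mulQ, invQ, (fun a => mkQ (plus a) a (St_pl a)).
  split; [|split; [|split; [|split; [|split]]]].
  - split; [exact QA|]. split; [exact QI|].
    intros q r Hr. exact (uniq_gen Q mulQ invQ QA QI Qcomm q r Hr).
  - intros a b E. apply mkQ_inv in E. apply f_inj; exact E.
  - intros a b. rewrite mul_mk. apply mkQ_eq. apply Eq_sym. apply f_hom, UV.
  - intro q. destruct (Q_surj q) as [a [b [H ->]]]. exists a, b.
    rewrite inv_mk, mul_mk. apply mkQ_eq. apply Eq_sym, f_Iorder; auto using UV.
  - intro a. rewrite inv_mk, mul_mk. apply mkQ_eq. apply Eq_sym. apply f_plus, UV.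
  - intro a. rewrite inv_mk, mul_mk. apply mkQ_eq. apply Eq_sym. apply f_star, UV.
Qed.

End Ample.

Lemma forward (S : Type) (mul : S -> S -> S) (plus star : S -> S) :
  has_biunary_left_Iquotients mul plus star ->
  (forall b c : S, exists u v : S,
     mul u b = mul v c /\
     plus u = plus v /\ plus v = plus (mul v c) /\
     mul b (star c) = mul (star u) b).
Proof.
  intros [Q [mQ [iQ [f [HI [Hinj [Hhom [Hord [Hp Hs]]]]]]]]] b c.
  destruct (Hord (mQ (f b) (iQ (f c)))) as [a [d Had]].
  exists (mul (plus d) a), (mul (plus a) d).
  destruct (Qfwd Q mQ iQ HI (f a) (f d)) as [K1 K2].
  assert (FU : f (mul (plus d) a) = mQ (mQ (f d) (iQ (f d))) (f a)) by (rewrite Hhom, Hp; reflexivity).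
  assert (FV : f (mul (plus a) d) = mQ (mQ (f a) (iQ (f a))) (f d)) by (rewrite Hhom, Hp; reflexivity).
  rewrite <- FU, <- FV in K1, K2. rewrite <- Had in K1.
  destruct (Pfwd Q mQ iQ HI _ _ (f b) (f c) K1 K2) as [G2 [G3 G4]].
  split; [|split; [|split]]; apply Hinj.
  - rewrite (Hhom (mul (plus d) a) b), (Hhom (mul (plus a) d) c). exact G2.
  - rewrite (Hp (mul (plus d) a)), (Hp (mul (plus a) d)). exact K2.
  - rewrite (Hp (mul (plus a) d)), (Hp (mul (mul (plus a) d) c)), (Hhom (mul (plus a) d) c).
    symmetry. exact G3.
  - rewrite (Hhom b (star c)), (Hhom (star (mul (plus d) a)) b), !Hs. exact G4.
Qed.

Theorem corollary4p8 (S : Type) (mul : S -> S -> S) (plus star : S -> S)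
  (Hample : ample mul plus star) :
  has_biunary_left_Iquotients mul plus star <->
  (forall b c : S, exists u v : S,
     mul u b = mul v c /\
     plus u = plus v /\ plus v = plus (mul v c) /\
     mul b (star c) = mul (star u) b).
Proof.
  split.
  - apply forward.
  - intro H. exact (backward S mul plus star Hample H).
Qed.
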